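(* Let $D$ be a Dedekind domain with quotient field $K$, $M$ a maximal ideal of $D$ of finite index, $\hat D$ the $M$-adic completion of $D$, $n\ge1$, and $C\in M_n(\hat D)$. Then $\{f(C)\mid f\in\mathrm{Int}_K(M_n(D))\}\subseteq \hat D[C]=\{s(C)\mid s\in\hat D[x]\}$.
   Context: $\mathrm{Int}_K(M_n(D))=\{f\in K[x]\mid f(C)\in M_n(D)\text{ for all }C\in M_n(D)\}$. For $f=g/d$ with $g\in D[x]$, $d\in D\setminus\{0\}$ and $C\in M_n(\hat D)$, $f(C)=d^{-1}g(C)$ computed over the quotient field of $\hat D$. *)

(* Defs.v *)
From HB Require Import structures.
From mathcomp Require Import all_boot all_order all_algebra.
Set Implicit Arguments. Unset Strict Implicit. Unset Printing Implicit Defensive.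
Import Order.TTheory GRing.Theory Num.Theory.
Local Open Scope ring_scope.

Definition is_ideal (D : comRingType) (I : D -> Prop) : Prop :=
  [/\ I 0, (forall x y, I x -> I y -> I (x + y)) & (forall a x, I x -> I (a * x))].

Definition in_span (D : comRingType) (s : seq D) (x : D) : Prop :=
  exists c : seq D, size c = size s /\ x = \sum_(i < size s) c`_i * s`_i.

Definition prime_ideal (D : comRingType) (I : D -> Prop) : Prop :=
  [/\ is_ideal I, ~ I 1 & forall a b, I (a * b) -> I a \/ I b].

Definition maximal_ideal (D : comRingType) (I : D -> Prop) : Prop :=
  [/\ is_ideal I, ~ I 1 &
      forall J : D -> Prop, is_ideal J -> (forall x, I x -> J x) ->
        (forall x, J x -> I x) \/ J 1].

Definition noetherian (D : comRingType) : Prop :=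
  forall I : D -> Prop, is_ideal I ->
    exists s : seq D, (forall i, (i < size s)%N -> I s`_i) /\
                      (forall x, I x <-> in_span s x).

Definition integrally_closed (D : idomainType) : Prop :=
  forall (x : {fraction D}) (p : {poly D}),
    p \is monic -> root (map_poly (@tofrac D) p) x -> exists a : D, x = tofrac a.

Definition dedekind (D : idomainType) : Prop :=
  [/\ noetherian D, integrally_closed D &
      forall P : D -> Prop, prime_ideal P -> (exists x, P x /\ x != 0) -> maximal_ideal P].

Definition finite_index (D : comRingType) (M : D -> Prop) : Prop :=
  exists reps : seq D, forall x, exists2 r, r \in reps & M (x - r).

Fixpoint ideal_pow (D : comRingType) (M : D -> Prop) (k : nat) : D -> Prop :=
  match k with
  | 0 => fun _ => True
  | k'.+1 => fun x => exists a b : seq D,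
      [/\ size a = size b,
          forall i, (i < size a)%N -> M a`_i,
          forall i, (i < size a)%N -> ideal_pow M k' b`_i &
          x = \sum_(i < size a) a`_i * b`_i]
  end.

Definition mx_eval (R : comRingType) (n : nat) (p : {poly R}) (A : 'M[R]_n) : 'M[R]_n :=
  \sum_(i < size p) p`_i *: A ^+ i.

(* f in Int_K(M_n(D)) for f in K[x], K = {fraction D} *)
Definition int_valued_mx (D : idomainType) (n : nat) (f : {poly {fraction D}}) : Prop :=
  forall C : 'M[D]_n, exists B : 'M[D]_n,
    mx_eval f (map_mx (@tofrac D) C) = map_mx (@tofrac D) B.

(* An n x n matrix over D^: a sequence (C_k)_k of matrices over D with
   C_{k+1} = C_k mod M^k entrywise (C_k represents the image in M_n(D/M^k)). *)
Definition completion_mx (D : comRingType) (M : D -> Prop) (n : nat)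
    (C : nat -> 'M[D]_n) : Prop :=
  forall k i j, ideal_pow M k (C k.+1 i j - C k i j).

(* A polynomial over D^ of size <= N: a coherent sequence of polynomials over D. *)
Definition completion_poly (D : comRingType) (M : D -> Prop) (N : nat)
    (s : nat -> {poly D}) : Prop :=
  (forall k, (size (s k) <= N)%N) /\
  (forall k i, ideal_pow M k ((s k.+1)`_i - (s k)`_i)).

(* Main.v *)
Require Import Defs.
From HB Require Import structures.
From mathcomp Require Import all_boot all_order all_algebra.
From mathcomp Require Import ring.
From Stdlib Require Import Classical ClassicalEpsilon.
Set Implicit Arguments. Unset Strict Implicit. Unset Printing Implicit Defensive.
Import Order.TTheory GRing.Theory Num.Theory.
Local Open Scope ring_scope.
Section IdealPow.
Variable (D : comNzRingType) (M : D -> Prop).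
Hypothesis hM : is_ideal M.

Lemma ip_ideal k : is_ideal (ideal_pow M k).
Proof.
case: hM => M0 MD MM.
case: k => [|k] /=; first by split.
split.
- by exists [::], [::]; split => //=; rewrite big_ord0.
- move=> x y [a [b [sab Ma Mb ->]]] [a' [b' [sab' Ma' Mb' ->]]].
  exists (a ++ a'), (b ++ b'); split.
  + by rewrite !size_cat sab sab'.
  + move=> i; rewrite size_cat nth_cat => Hl; case: ltnP => Hi; first exact: Ma.
    by apply: Ma'; rewrite -(ltn_add2l (size a)) subnKC.
  + move=> i; rewrite size_cat nth_cat -sab => Hl; case: ltnP => Hi; first by apply: Mb.
    by apply: Mb'; rewrite -(ltn_add2l (size a)) subnKC.
  + rewrite size_cat big_split_ord /=; congr (_ + _); apply: eq_bigr => i _.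
      by rewrite !nth_cat ltn_ord -sab ltn_ord.
    by rewrite !nth_cat -sab !ltnNge leq_addr /= !addKn.
- move=> c x [a [b [sab Ma Mb ->]]].
  exists [seq c * z | z <- a], b; split.
  + by rewrite size_map.
  + by move=> i; rewrite size_map => Hi; rewrite (nth_map 0) //; apply: MM; apply: Ma.
  + by rewrite size_map.
  + rewrite size_map mulr_sumr; apply: eq_bigr => i _.
    by rewrite (nth_map 0) // mulrA.
Qed.

Lemma ip0 k : ideal_pow M k 0. Proof. by case: (ip_ideal k). Qed.
Lemma ipD k x y : ideal_pow M k x -> ideal_pow M k y -> ideal_pow M k (x + y).
Proof. by case: (ip_ideal k) => _ H _; apply: H. Qed.
Lemma ipMl k a x : ideal_pow M k x -> ideal_pow M k (a * x).
Proof. by case: (ip_ideal k) => _ _ H; apply: H. Qed.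
Lemma ipMr k a x : ideal_pow M k x -> ideal_pow M k (x * a).
Proof. by rewrite mulrC; apply: ipMl. Qed.
Lemma ipN k x : ideal_pow M k x -> ideal_pow M k (- x).
Proof. by move=> H; rewrite -mulN1r; apply: ipMl. Qed.
Lemma ipB k x y : ideal_pow M k x -> ideal_pow M k y -> ideal_pow M k (x - y).
Proof. by move=> Hx Hy; apply: ipD => //; apply: ipN. Qed.
Lemma ip_sum k (I : finType) (F : I -> D) :
  (forall i, ideal_pow M k (F i)) -> ideal_pow M k (\sum_i F i).
Proof. by move=> H; apply: (big_ind (ideal_pow M k)) => //; [apply: ip0 | apply: ipD]. Qed.

Lemma ip_step k m y : M m -> ideal_pow M k y -> ideal_pow M k.+1 (m * y).
Proof.
move=> Mm Hy; exists [:: m], [:: y]; split => //.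
- by case.
- by case.
- by rewrite big_ord1.
Qed.

Lemma ip_S k x : ideal_pow M k.+1 x -> ideal_pow M k x.
Proof.
elim: k x => [//|k IH] x [a [b [sab Ma Mb ->]]].
exists a, b; split => // i Hi; exact: IH (Mb i Hi).
Qed.

Lemma ip_mono j k x : (j <= k)%N -> ideal_pow M k x -> ideal_pow M j x.
Proof.
move=> /subnK <-; elim: (k - j)%N x => [//|l IH] x H.
by apply: IH; apply: ip_S; rewrite -addSn.
Qed.

Lemma ip1 x : ideal_pow M 1 x <-> M x.
Proof.
split.
- move=> [a [b [sab Ma Mb ->]]].
  case: hM => M0 MD MM.
  apply: (big_ind M) => // i _.
  by rewrite mulrC; apply: MM; apply: Ma.
- by move=> Mx; rewrite -[x]mulr1; apply: ip_step.
Qed.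

Lemma ip_pow k m : M m -> ideal_pow M k (m ^+ k).
Proof.
move=> Mm; elim: k => [//|k IH]; rewrite exprS; exact: ip_step.
Qed.

End IdealPow.
Section Cong.
Variable (R : comNzRingType) (J : R -> Prop).
Hypothesis hJ : is_ideal J.

Lemma J0 : J 0. Proof. by case: hJ. Qed.
Lemma JD x y : J x -> J y -> J (x + y). Proof. by case: hJ => _ H _; apply: H. Qed.
Lemma JMl a x : J x -> J (a * x). Proof. by case: hJ => _ _ H; apply: H. Qed.
Lemma JMr a x : J x -> J (x * a). Proof. by rewrite mulrC; apply: JMl. Qed.
Lemma JN x : J x -> J (- x). Proof. by move=> H; rewrite -mulN1r; apply: JMl. Qed.
Lemma JB x y : J x -> J y -> J (x - y). Proof. by move=> Hx Hy; apply: JD => //; apply: JN. Qed.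
Lemma Jsum (I : Type) (r : seq I) (P : pred I) (F : I -> R) :
  (forall i, P i -> J (F i)) -> J (\sum_(i <- r | P i) F i).
Proof. by move=> H; apply: (big_ind J) => //; [apply: J0 | apply: JD]. Qed.

Lemma JcongD x y x' y' : J (x - x') -> J (y - y') -> J ((x + y) - (x' + y')).
Proof. by move=> H1 H2; rewrite opprD addrACA; apply: JD. Qed.
Lemma JcongM x y x' y' : J (x - x') -> J (y - y') -> J ((x * y) - (x' * y')).
Proof.
move=> H1 H2.
have -> : x * y - x' * y' = x * (y - y') + (x - x') * y'.
  by rewrite mulrBr mulrBl addrA subrK.
by apply: JD; [apply: JMl | apply: JMr].
Qed.

Lemma det_cong n (P Q : 'M[R]_n) :
  (forall i j, J (P i j - Q i j)) -> J (\det P - \det Q).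
Proof.
move=> H; rewrite /determinant.
apply: (big_ind2 (fun x y => J (x - y))).
- by rewrite subrr; apply: J0.
- by move=> *; apply: JcongD.
- move=> s _; apply: JcongM; first by rewrite subrr; apply: J0.
  apply: (big_ind2 (fun x y => J (x - y))).
  + by rewrite subrr; apply: J0.
  + by move=> *; apply: JcongM.
  + by move=> i _; apply: H.
Qed.

Lemma mulmx_cong m n p (A A' : 'M[R]_(m, n)) (B B' : 'M[R]_(n, p)) :
  (forall i j, J (A i j - A' i j)) -> (forall i j, J (B i j - B' i j)) ->
  forall i j, J ((A *m B) i j - (A' *m B') i j).
Proof.
move=> HA HB i j; rewrite !mxE -sumrB; apply: Jsum => k _.
exact: JcongM.
Qed.

Lemma exp_cong m (A A' : 'M[R]_m) k :
  (forall i j, J (A i j - A' i j)) -> forall i j, J ((A ^+ k) i j - (A' ^+ k) i j).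
Proof.
move=> HA; elim: k => [|k IH] i j.
  by rewrite !expr0 subrr; apply: J0.
by rewrite !exprS; apply: mulmx_cong.
Qed.

End Cong.
Definition pin (D : comNzRingType) (I : D -> Prop) (p : {poly D}) := forall i, I p`_i.

Lemma pin_ideal (D : comNzRingType) (I : D -> Prop) : is_ideal I -> is_ideal (pin I).
Proof.
move=> hI; split.
- by move=> i; rewrite coef0; apply: J0.
- by move=> x y Hx Hy i; rewrite coefD; apply: JD.
- move=> a x Hx i; rewrite coefM; apply: Jsum => // j _; exact: JMl.
Qed.

Lemma horner_mx_sum (D : comNzRingType) m (A : 'M[D]_m.+1) (p : {poly D}) :
  horner_mx A p = \sum_(i < size p) p`_i *: A ^+ i.
Proof.
have -> : horner_mx A p = horner_mx A (\poly_(i < size p) p`_i) by rewrite coefK.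
rewrite poly_def rmorph_sum /=; apply: eq_bigr => i _.
by rewrite horner_mxZ rmorphXn /= horner_mx_X.
Qed.

Lemma mx_evalE (D : comNzRingType) m (A : 'M[D]_m.+1) (p : {poly D}) :
  mx_eval p A = horner_mx A p.
Proof. by rewrite horner_mx_sum. Qed.

Lemma horner_in (D : comNzRingType) (I : D -> Prop) (hI : is_ideal I) m
   (A : 'M[D]_m.+1) (p : {poly D}) :
  pin I p -> forall i j, I (horner_mx A p i j).
Proof.
move=> Hp i j; rewrite horner_mx_sum summxE; apply: Jsum => // k _.
by rewrite mxE; apply: JMr.
Qed.

Lemma horner_cong (D : comNzRingType) (I : D -> Prop) (hI : is_ideal I) m
   (A B : 'M[D]_m.+1) (p : {poly D}) :
  (forall i j, I (A i j - B i j)) -> forall i j, I (horner_mx A p i j - horner_mx B p i j).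
Proof.
move=> HAB i j; rewrite !horner_mx_sum !summxE -sumrB; apply: Jsum => // k _.
rewrite !mxE -mulrBr; apply: JMl => //; exact: exp_cong.
Qed.

Lemma char_poly_cong (D : comNzRingType) (I : D -> Prop) (hI : is_ideal I) m
   (A B : 'M[D]_m) :
  (forall i j, I (A i j - B i j)) -> pin I (char_poly A - char_poly B).
Proof.
move=> HAB; apply: det_cong; first exact: pin_ideal.
move=> i j k; rewrite !mxE coefB !coefD !coefN; rewrite !coefC.
rewrite opprB addrC addrA subrK.
case: eqP => _; last by rewrite subrr; apply: J0.
by rewrite -opprB; apply: JN.
Qed.
Lemma horner_mx_sumN (D : comNzRingType) m (A : 'M[D]_m.+1) (p : {poly D}) N :
  (size p <= N)%N -> horner_mx A p = \sum_(i < N) p`_i *: A ^+ i.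
Proof.
move=> HN; rewrite horner_mx_sum.
rewrite (big_ord_widen N (fun i => p`_i *: A ^+ i)) //.
rewrite [RHS](bigID (fun i : 'I_N => (i < size p)%N)) /= [X in _ = _ + X]big1 ?addr0 //.
by move=> i; rewrite -leqNgt => /(nth_default 0) ->; rewrite scale0r.
Qed.

Definition compm (D : comNzRingType) (m : nat) (p : {poly D}) : 'M[D]_m.+1 :=
  \matrix_(i, j) if i == m :> nat then - p`_j else (i.+1 == j :> nat)%:R.

Section Companion.
Variable (D : idomainType) (m : nat) (p : {poly D}).
Hypothesis pmon : p \is monic.
Hypothesis psize : size p = m.+2.

Let C := compm m p.
Let e (i : nat) : 'rV[D]_m.+1 := delta_mx 0 (inord i).

Lemma e_comp (i : nat) : (i < m)%N -> e i *m C = e i.+1.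
Proof.
move=> Hi; apply/rowP => j; rewrite !mxE (bigD1 (inord i)) //= big1 ?addr0.
  rewrite !mxE !eqxx mul1r inordK ?(ltn_trans Hi) // (ltn_eqF Hi).
  by rewrite -val_eqE /= inordK ?ltnS // eq_sym.
by move=> k /negPf Hk; rewrite !mxE Hk mul0r.
Qed.

Lemma e_comp_last : e m *m C = - \row_j p`_j.
Proof.
apply/rowP => j; rewrite !mxE (bigD1 (inord m)) //= big1 ?addr0.
  by rewrite !mxE !eqxx mul1r inordK // eqxx.
by move=> k /negPf Hk; rewrite !mxE Hk mul0r.
Qed.

Lemma e0_pow (k : nat) : (k <= m)%N -> e 0 *m C ^+ k = e k.
Proof.
elim: k => [|k IH] Hk; first by rewrite expr0 mulmx1.
by rewrite exprSr mulmxA IH ?(ltnW Hk) // e_comp.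
Qed.

Lemma e0_pow_last : e 0 *m C ^+ m.+1 = - \row_j p`_j.
Proof. by rewrite exprSr mulmxA e0_pow // e_comp_last. Qed.

Lemma row_e_sum (r : {poly D}) :
  \sum_(i < m.+1) r`_i *: e i = \row_j r`_j.
Proof.
apply/rowP => j; rewrite summxE (bigD1 j) //= big1 ?addr0.
  by rewrite !mxE inord_val !eqxx mulr1.
move=> k Hk; rewrite !mxE inord_val.
by rewrite eq_sym (negPf Hk) mulr0.
Qed.

Lemma e0_horner_small (r : {poly D}) : (size r <= m.+1)%N ->
  e 0 *m horner_mx C r = \row_j r`_j.
Proof.
move=> Hr; rewrite (horner_mx_sumN _ Hr) mulmx_sumr -row_e_sum.
apply: eq_bigr => i _; rewrite -scalemxAr e0_pow ?inord_val //.
by rewrite -ltnS.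
Qed.

Lemma e0_horner_p : e 0 *m horner_mx C p = 0.
Proof.
rewrite (horner_mx_sumN _ (eq_leq psize)) big_ord_recr /= mulmxDr.
rewrite mulmx_sumr.
have -> : p`_m.+1 = 1.
  by move: pmon; rewrite monicE /lead_coef psize => /eqP.
rewrite scale1r e0_pow_last.
have -> : \sum_(i < m.+1) e 0 *m (p`_i *: C ^+ i) = \sum_(i < m.+1) p`_i *: e i.
  by apply: eq_bigr => i _; rewrite -scalemxAr e0_pow // -ltnS.
by rewrite row_e_sum subrr.
Qed.

Lemma row0_horner (g : {poly D}) (j : 'I_m.+1) :
  horner_mx C g ord0 j = (g %% p)`_j.
Proof.
have Hm : (size (g %% p)%R <= m.+1)%N.
  by rewrite -ltnS -psize ltn_modp -size_poly_eq0 psize.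
have := congr1 (fun M : 'rV[D]_m.+1 => M ord0 j) (e0_horner_small Hm).
rewrite [in X in _ = X]mxE => <-.
have -> : horner_mx C g ord0 j = (e 0 *m horner_mx C g) ord0 j.
  rewrite -rowE mxE; congr (horner_mx C g _ j).
  by apply: val_inj; rewrite /= inordK.
rewrite {1}(Pdiv.IdomainMonic.divp_eq pmon g) rmorphD /= mulmxDr.
by rewrite mulrC rmorphM /= mulmxA e0_horner_p mul0mx add0r.
Qed.

End Companion.
Lemma min_ex (P : nat -> Prop) : (exists n, P n) -> exists n, P n /\ forall k, (k < n)%N -> ~ P k.
Proof.
move=> [n Hn]; elim: n {-2}n (leqnn n) Hn => [|N IH] n Hn Pn.
  by exists n; split => // k Hk; have := leq_trans Hk Hn.
case: (classic (exists k, (k < n)%N /\ P k)) => [[k [Hk Pk]]|H].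
  by apply: (IH k) => //; rewrite -ltnS (leq_trans Hk).
exists n; split => // k Hk Pk; apply: H; by exists k.
Qed.

Lemma ideal_chain_mono (D : comNzRingType) (I : nat -> D -> Prop) :
  (forall j x, I j x -> I j.+1 x) -> forall j k x, (j <= k)%N -> I j x -> I k x.
Proof.
move=> HI j k x /subnK <-; elim: (k - j)%N => [//|l IH] Hx.
by rewrite addSn; apply: HI; apply: IH.
Qed.

Lemma acc (D : comNzRingType) : noetherian D -> forall I : nat -> D -> Prop,
  (forall j, is_ideal (I j)) -> (forall j x, I j x -> I j.+1 x) ->
  exists J, forall x, I J.+1 x -> I J x.
Proof.
move=> hN I hI HI.
have mono := ideal_chain_mono HI.
pose U x := exists j, I j x.
have hU : is_ideal U.
  split.
  - by exists 0%N; apply: (J0 (hI 0%N)).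
  - move=> x y [j Hx] [k Hy]; exists (maxn j k).
    apply: JD; first exact: hI.
    + by apply: (mono j) => //; rewrite leq_maxl.
    + by apply: (mono k) => //; rewrite leq_maxr.
  - by move=> a x [j Hx]; exists j; apply: JMl.
have [s [Hs HsU]] := hN U hU.
have : forall n, (n <= size s)%N -> exists J, forall i, (i < n)%N -> I J s`_i.
  elim => [|n IH] Hn; first by exists 0%N.
  have [J HJ] := IH (ltnW Hn).
  have [j Hj] := Hs n Hn.
  exists (maxn J j) => i; rewrite ltnS leq_eqVlt => /orP [/eqP ->|Hi].
    by apply: (mono j) => //; rewrite leq_maxr.
  by apply: (mono J); [rewrite leq_maxl | apply: HJ].
move=> /(_ (size s) (leqnn _)) [J HJ].
exists J => x Hx.
have [c [_ ->]] : in_span s x by apply/HsU; exists J.+1.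
apply: (Jsum (hI J)) => i _; apply: (JMl (hI J)); apply: HJ; exact: ltn_ord.
Qed.

Lemma noeth_ind (D : comNzRingType) : noetherian D ->
  forall P : (D -> Prop) -> Prop,
  (forall I, is_ideal I ->
     (forall J, is_ideal J -> (forall x, I x -> J x) -> (exists x, J x /\ ~ I x) -> P J) -> P I) ->
  forall I, is_ideal I -> P I.
Proof.
move=> hN P HP I0 hI0; apply: NNPP => nP0.
pose T := {I : D -> Prop | is_ideal I /\ ~ P I}.
have step : forall t : T, {t' : T | (forall x, sval t x -> sval t' x) /\ exists x, sval t' x /\ ~ sval t x}.
  move=> [I [hI nPI]].
  apply: constructive_indefinite_description.
  have : exists J, (is_ideal J /\ ~ P J) /\ (forall x, I x -> J x) /\ exists x, J x /\ ~ I x.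
    apply: NNPP => H; apply: nPI; apply: HP => // J hJ sIJ strict.
    apply: NNPP => nPJ; apply: H; exists J; split => //.
  move=> [J [HJ HJ']]; by exists (exist _ J HJ).
pose f := fix f (j : nat) : T := match j with 0 => exist _ I0 (conj hI0 nP0) | S j => sval (step (f j)) end.
have [J HJ] := @acc D hN (fun j => sval (f j)) (fun j => proj1 (svalP (f j)))
   (fun j x => proj1 (svalP (step (f j))) x).
have [x [Hx nHx]] := proj2 (svalP (step (f J))).
by apply: nHx; apply: HJ.
Qed.

Section MaxIdeal.
Variable (D : comNzRingType) (M : D -> Prop).
Hypothesis hM : maximal_ideal M.

Lemma max_inv z : ~ M z -> exists u v, M u /\ v * z = 1 - u.
Proof.
case: hM => hI n1 Hmax nz.
pose J y := exists u v, M u /\ y = u + v * z.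
have hJ : is_ideal J.
  split.
  - by exists 0, 0; split; [apply: J0 | rewrite mul0r addr0].
  - move=> x y [u [v [Mu ->]]] [u' [v' [Mu' ->]]]; exists (u + u'), (v + v'); split.
      exact: JD.
    by rewrite mulrDl addrACA.
  - move=> a x [u [v [Mu ->]]]; exists (a * u), (a * v); split; first exact: JMl.
    by rewrite mulrDr mulrA.
case: (Hmax J hJ).
- by move=> x Mx; exists x, 0; rewrite mul0r addr0.
- by move=> H; exfalso; apply: nz; apply: H; exists 0, 1; split; [apply: J0 | rewrite add0r mul1r].
- move=> [u [v [Mu H1]]]; exists u, v; split => //.
  by rewrite H1 (addrC u) addrK.
Qed.

Lemma max_prime a b : M (a * b) -> ~ M a -> M b.
Proof.
move=> Mab na; have [u [v [Mu Huv]]] := max_inv na.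
case: hM => hI _ _.
have -> : b = u * b + v * (a * b) by rewrite mulrA Huv mulrBl mul1r addrC subrK.
by apply: (JD hI); [apply: (JMr hI) | apply: (JMl hI)].
Qed.

Lemma max_primary z k x : ~ M z -> ideal_pow M k (z * x) -> ideal_pow M k x.
Proof.
move=> nz Hzx; have [u [v [Mu Huv]]] := max_inv nz.
case: (hM) => hI _ _.
have hk := ip_ideal hI k.
have E : (\sum_(i < k) u ^+ i) * (v * z) = 1 - u ^+ k.
  by rewrite Huv -[1 - u ^+ k]opprB subrX1 -mulNr opprB mulrC.
have -> : x = u ^+ k * x + (\sum_(i < k) u ^+ i) * v * (z * x).
  by rewrite mulrA -(mulrA _ v) E mulrBl mul1r addrC subrK.
apply: ipD => //; first by apply: ipMr => //; apply: ip_pow.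
by apply: ipMl.
Qed.

End MaxIdeal.
Section Local.
Variable (D : idomainType) (M : D -> Prop).
Hypothesis hD : dedekind D.
Hypothesis hM : maximal_ideal M.

Definition prodcond (I : D -> Prop) (r : nat) (t : D) :=
  ~ M t /\ forall ys : seq D, size ys = r -> (forall i, (i < r)%N -> M ys`_i) ->
     I (t * \prod_(y <- ys) y).

Lemma step_a (a : D) : a != 0 -> forall I, is_ideal I -> I a -> exists r t, prodcond I r t.
Proof.
move=> a0; have [hN _ hP] := hD.
have [hMi nM1 Mmax] := hM.
apply: (noeth_ind hN (P := fun I => I a -> exists r t, prodcond I r t)).
move=> I hI IH Ia.
case: (classic (I 1)) => [I1|nI1].
  exists 0%N, 1; split => // ys /size0nil -> _.
  by rewrite big_nil mulr1.
case: (classic (prime_ideal I)) => [pI|npI].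
  have mI : maximal_ideal I by apply: hP => //; exists a.
  have [_ _ Imax] := mI.
  case: (classic (exists t, I t /\ ~ M t)) => [[t [It nMt]]|H].
    exists 0%N, t; split => // ys /size0nil -> _.
    by rewrite big_nil mulr1.
  have IM : forall x, I x -> M x.
    by move=> x Ix; apply: NNPP => nMx; apply: H; exists x.
  have MI : forall x, M x -> I x.
    by case: (Imax M hMi IM) => [H1|H1] //; exfalso; apply: nM1.
  exists 1%N, 1; split => // ys.
  case: ys => [//|y [|//]] _ /(_ 0%N isT) /= My.
  by rewrite big_seq1 mul1r; apply: MI.
have [x [y [Ixy [nIx nIy]]]] : exists x y, I (x * y) /\ ~ I x /\ ~ I y.
  apply: NNPP => H; apply: npI; split => // u v Iuv.
  apply: NNPP => H2; apply: H; exists u, v; split => //; split.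
  - by move=> Iu; apply: H2; left.
  - by move=> Iv; apply: H2; right.
pose Jx z := exists i c, I i /\ z = i + c * x.
pose Jy z := exists i c, I i /\ z = i + c * y.
have ideal_ext : forall w, is_ideal (fun z => exists i c, I i /\ z = i + c * w).
  move=> w; split.
  - by exists 0, 0; split; [apply: J0 | rewrite mul0r addr0].
  - move=> z1 z2 [i1 [c1 [I1 ->]]] [i2 [c2 [I2 ->]]]; exists (i1 + i2), (c1 + c2); split.
      exact: JD.
    by rewrite mulrDl addrACA.
  - move=> u z [i [c [Ii ->]]]; exists (u * i), (u * c); split; first exact: JMl.
    by rewrite mulrDr mulrA.
have sub_ext : forall w z, I z -> exists i c, I i /\ z = i + c * w.
  by move=> w z Iz; exists z, 0; rewrite mul0r addr0.
have [r1 [t1 [nM1' H1]]] : exists r t, prodcond Jx r t.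
  apply: IH => //; first exact: ideal_ext.
  - by move=> z Iz; apply: sub_ext.
  - by exists x; split => //; exists 0, 1; rewrite add0r mul1r; split => //; apply: J0.
  - by apply: sub_ext.
have [r2 [t2 [nM2' H2]]] : exists r t, prodcond Jy r t.
  apply: IH => //; first exact: ideal_ext.
  - by move=> z Iz; apply: sub_ext.
  - by exists y; split => //; exists 0, 1; rewrite add0r mul1r; split => //; apply: J0.
  - by apply: sub_ext.
exists (r1 + r2)%N, (t1 * t2); split.
  by move=> Mt; apply: nM2'; apply: (max_prime hM Mt nM1').
move=> ys Hs Hys.
have Hs1 : size (take r1 ys) = r1 by rewrite size_takel // Hs leq_addr.
have Hs2 : size (drop r1 ys) = r2 by rewrite size_drop Hs addKn.
have [i1 [c1 [Ii1 E1]]] : Jx (t1 * \prod_(y <- take r1 ys) y).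
  apply: H1 => // i Hi; rewrite nth_take //; apply: Hys.
  by rewrite (leq_trans Hi) ?leq_addr.
have [i2 [c2 [Ii2 E2]]] : Jy (t2 * \prod_(y <- drop r1 ys) y).
  apply: H2 => // i Hi; rewrite nth_drop; apply: Hys.
  by rewrite ltn_add2l.
have -> : t1 * t2 * \prod_(y <- ys) y =
   (t1 * \prod_(y <- take r1 ys) y) * (t2 * \prod_(y <- drop r1 ys) y).
  by rewrite -{1}(cat_take_drop r1 ys) big_cat /=; ring.
rewrite E1 E2.
have -> : (i1 + c1 * x) * (i2 + c2 * y) = i1 * (i2 + c2 * y) + (c1 * x) * i2 + (c1 * c2) * (x * y)
  by ring.
by apply: JD => //; [apply: JD => //; [apply: JMr | apply: JMl] | apply: JMl].
Qed.

End Local.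
Section Local2.
Variable (D : idomainType) (M : D -> Prop).
Hypothesis hD : dedekind D.
Hypothesis hM : maximal_ideal M.

Lemma step_b (a : D) : a != 0 -> M a ->
  exists b, (forall m, M m -> exists w, b * m = a * w) /\ ~ exists w, b = a * w.
Proof.
move=> a0 Ma.
have [hMi nM1 _] := hM.
pose aD z := exists w, z = a * w.
have haD : is_ideal aD.
  split.
  - by exists 0; rewrite mulr0.
  - by move=> x y [w ->] [w' ->]; exists (w + w'); rewrite mulrDr.
  - by move=> c x [w ->]; exists (c * w); rewrite mulrCA.
have aDa : aD a by exists 1; rewrite mulr1.
have [r0 [[t0 Ht0] Hmin]] := min_ex (@step_a D M hD hM a a0 aD haD aDa).
case: r0 Ht0 Hmin => [|r1] [nMt Ht] Hmin.
  exfalso; have [w Hw] := Ht [::] erefl (fun i (Hi : (i < 0)%N) => False_ind _ (notF Hi)).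
  apply: nMt; move: Hw; rewrite big_nil mulr1 => ->; by apply: JMr.
have := Hmin r1 (ltnSn r1); rewrite /prodcond => H.
have [ys [Hys [HMys nys]]] : exists ys : seq D, size ys = r1 /\
    (forall i, (i < r1)%N -> M ys`_i) /\ ~ aD (t0 * \prod_(y <- ys) y).
  apply: NNPP => Hn; apply: H; exists t0; split => // ys Hs HM.
  by apply: NNPP => Hn2; apply: Hn; exists ys.
exists (t0 * \prod_(y <- ys) y); split => // m Mm.
have := Ht (rcons ys m); rewrite size_rcons Hys => /(_ erefl).
rewrite -cats1 big_cat big_seq1 /= mulrA.
move=> H'; apply: H' => i Hi; rewrite nth_cat Hys; case: ltnP => Hi2; first exact: HMys.
have -> : i = r1 by apply/eqP; rewrite eqn_leq Hi2 -ltnS Hi.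
by rewrite subnn.
Qed.

End Local2.
Lemma local_prin (D : idomainType) (M : D -> Prop) : dedekind D -> maximal_ideal M ->
  exists pi s, M pi /\ ~ M s /\ forall y, M y -> exists w, s * y = pi * w.
Proof.
move=> hD hM; have [hMi nM1 _] := hM; have [hN hIC _] := hD.
case: (classic (exists a, M a /\ a != 0)) => [[a [Ma a0]] | H]; last first.
  exists 0, 1; split; first exact: J0.
  split => // y My; exists 0; rewrite mul1r mul0r.
  by apply/eqP; apply: NNPP => ny; apply: H; exists y; split => //; apply/negP.
have [b [Hb nb]] := step_b hD hM a0 Ma.
case: (classic (exists m w, M m /\ b * m = a * w /\ ~ M w)) => [[m0 [w0 [Mm0 [E0 nw0]]]] | H2].
  exists m0, w0; split => //; split => // y My.
  have [w Hw] := Hb y My; exists w; apply: (mulfI a0).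
  have -> : a * (w0 * y) = (b * m0) * y by rewrite mulrA E0.
  have -> : a * (m0 * w) = m0 * (b * y) by rewrite Hw; ring.
  ring.
have H3 : forall m w, M m -> b * m = a * w -> M w.
  by move=> m w Mm E; apply: NNPP => nw; apply: H2; exists m, w.
exfalso; apply: nb.
have [gs [Hgs Hspan]] := hN M hMi.
pose l := size gs.
have : forall i : 'I_l, exists c : seq D, b * gs`_i = a * \sum_(j < l) c`_j * gs`_j.
  move=> i; have [w Hw] := Hb _ (Hgs i (ltn_ord i)).
  have [c [_ Hc]] := (Hspan w).1 (H3 _ _ (Hgs i (ltn_ord i)) Hw).
  by exists c; rewrite Hw Hc.
move=> /fin_all_exists [f Hf].
pose Cm : 'M[D]_l := \matrix_(i, j) (f i)`_j.
pose x : {fraction D} := (tofrac b) / (tofrac a).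
pose v : 'rV[{fraction D}]_l := \row_j tofrac gs`_j.
pose A := map_mx (@tofrac D) Cm^T.
have a0F : tofrac a != 0 by rewrite tofrac_eq0.
have eig : v *m A = x *: v.
  apply/rowP => i; rewrite !mxE.
  have : tofrac (b * gs`_i) = tofrac (a * \sum_(j < l) (f i)`_j * gs`_j) by rewrite Hf.
  rewrite !rmorphM /= rmorph_sum /= => E.
  rewrite /x mulrAC E mulrAC mulfV // mul1r.
  by apply: eq_bigr => j _; rewrite !mxE rmorphM /= mulrC.
have vn0 : v != 0.
  apply/negP => /eqP v0; move: a0 => /negP; apply.
  have [c [_ ->]] := (Hspan a).1 Ma.
  apply/eqP; apply: big1 => j _.
  have := congr1 (fun u : 'rV__ => u ord0 j) v0; rewrite !mxE => /eqP.
  by rewrite tofrac_eq0 => /eqP ->; rewrite mulr0.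
have rt : root (char_poly A) x.
  by rewrite -eigenvalue_root_char; apply/eigenvalueP; exists v.
have := hIC x (char_poly Cm^T) (char_poly_monic _).
rewrite map_char_poly => /(_ rt) [e He].
exists e; apply/eqP; rewrite -tofrac_eq rmorphM /=.
by rewrite -He /x mulrCA mulfV // mulr1.
Qed.
Lemma max_pow (D : comNzRingType) (M : D -> Prop) : maximal_ideal M ->
  forall s k, M (s ^+ k) -> (0 < k)%N -> M s.
Proof.
move=> hM s k; elim: k => [//|k IH] Msk _.
apply: NNPP => nMs; case: k IH Msk => [|k] IH Msk.
  by apply: nMs; rewrite expr1 in Msk.
apply: (nMs); apply: IH => //.
by apply: (max_prime hM _ nMs); rewrite -exprS.
Qed.

Lemma factA (D : idomainType) (M : D -> Prop) : dedekind D -> maximal_ideal M ->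
  forall d : D, d != 0 -> exists e, forall k x, ideal_pow M (k + e) (d * x) -> ideal_pow M k x.
Proof.
move=> hD hM d d0; have [hMi nM1 _] := hM; have [hN _ _] := hD.
have [pi [s [Mpi [nMs Hs]]]] := local_prin hD hM.
have s0 : s != 0 by apply/negP => /eqP s0; apply: nMs; rewrite s0; apply: J0.
have nMsk : forall k, ~ M (s ^+ k).
  move=> k Msk; case: k Msk => [|k] Msk; first by apply: nM1; rewrite expr0 in Msk.
  by apply: nMs; apply: (max_pow hM Msk).
have Hy : forall y, exists w, M y -> s * y = pi * w.
  move=> y; case: (classic (M y)) => [My|nMy]; last by exists 0.
  by have [w Hw] := Hs y My; exists w.
pose h y := sval (constructive_indefinite_description _ (Hy y)).
have Hh : forall y, M y -> s * y = pi * h y.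
  by move=> y; rewrite /h; case: constructive_indefinite_description.
pose dd j := iter j h d.
have pw : forall j, (forall i, (i < j)%N -> M (dd i)) -> s ^+ j * d = pi ^+ j * dd j.
  elim => [|j IH] Hj; first by rewrite !expr0 !mul1r.
  rewrite exprS -mulrA IH; last by move=> i Hi; apply: Hj; rewrite ltnW.
  rewrite mulrCA Hh; last by apply: Hj.
  by rewrite exprSr -mulrA.
have [e0 He0] : exists j, ~ M (dd j).
  apply: NNPP => Hall.
  have Mall : forall j, M (dd j) by move=> j; apply: NNPP => nM; apply: Hall; exists j.
  pose E j y := exists m c, s ^+ m * y = c * dd j.
  have hE : forall j, is_ideal (E j).
    move=> j; split.
    - by exists 0%N, 0; rewrite !mulr0 mul0r.
    - move=> y1 y2 [m1 [c1 H1]] [m2 [c2 H2]]; exists (m1 + m2)%N, (s ^+ m2 * c1 + s ^+ m1 * c2).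
      rewrite exprD mulrDr mulrDl -!mulrA -H1 -H2; ring.
    - move=> u y [m [c H]]; exists m, (u * c).
      by rewrite mulrCA H mulrA.
  have Einc : forall j y, E j y -> E j.+1 y.
    move=> j y [m [c H]]; exists m.+1, (c * pi).
    by rewrite exprS -mulrA H mulrCA Hh // mulrA.
  have [J HJ] := acc hN hE Einc.
  have [m [c Hc]] : E J (dd J.+1) by apply: HJ; exists 0%N, 1; rewrite expr0 !mul1r.
  have ddJ0 : dd J != 0.
    apply/negP => /eqP z.
    have := pw J (fun i _ => Mall i); rewrite z mulr0 => /eqP.
    by rewrite mulf_eq0 (negPf d0) orbF expf_eq0 (negPf s0) andbF.
  apply: (nMsk m.+1).
  have -> : s ^+ m.+1 = pi * c.
    apply: (mulIf ddJ0).
    rewrite exprSr -mulrA Hh // [pi * _]mulrC mulrA Hc; ring.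
  exact: JMr.
have [e [Me Hmin]] := @min_ex (fun j => ~ M (dd j)) (ex_intro _ e0 He0).
have Hpe := pw e (fun i Hi => NNPP _ (Hmin i Hi)).
pose T j y := exists w, s ^+ j * y = pi ^+ j * w.
have hT : forall j, is_ideal (T j).
  move=> j; split.
  - by exists 0; rewrite !mulr0.
  - by move=> y1 y2 [w1 H1] [w2 H2]; exists (w1 + w2); rewrite !mulrDr H1 H2.
  - by move=> u y [w H]; exists (u * w); rewrite mulrCA H mulrCA.
have L : forall j y, ideal_pow M j y -> T j y.
  elim => [|j IH] y.
    by move=> _; exists y; rewrite expr0 !mul1r.
  move=> [a [b [sab Ma Mb ->]]].
  apply: (Jsum (hT j.+1)) => i _.
  have [u Hu] := Hs _ (Ma i (ltn_ord i)).
  have [v Hv] := IH _ (Mb i (ltn_ord i)).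
  exists (u * v).
  rewrite !exprS; transitivity ((s * a`_i) * (s ^+ j * b`_i)); first ring.
  by rewrite Hu Hv; ring.
exists e => k x Hx.
have [w Hw] := L _ _ Hx.
have z0 : s ^+ e * d != 0 by rewrite mulf_eq0 negb_or expf_eq0 (negPf s0) andbF d0.
have E : s ^+ k * dd e * x = pi ^+ k * w.
  apply: (mulfI z0).
  have : s ^+ (k + e) * (d * x) * dd e = pi ^+ (k + e) * w * dd e by rewrite Hw.
  rewrite exprD => H.
  transitivity (pi ^+ k * w * (pi ^+ e * dd e)); last by rewrite -Hpe; ring.
  transitivity (s ^+ k * s ^+ e * (d * x) * dd e); first ring.
  by rewrite H exprD; ring.
apply: (max_primary hM (z := s ^+ k * dd e)).
  by move=> Mz; apply: Me; apply: (max_prime hM Mz (nMsk k)).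
by rewrite E; apply: ipMr => //; apply: ip_pow.
Qed.
Lemma int_rem (D : idomainType) (m : nat) (g : {poly D}) (d : D) (hd : d != 0)
    (hf : int_valued_mx m.+1 ((tofrac d)^-1 *: map_poly (@tofrac D) g))
    (chi : {poly D}) (cmon : chi \is monic) (csize : size chi = m.+2) :
  exists t : {poly D}, (size t <= m.+1)%N /\ g %% chi = d *: t.
Proof.
have [B HB] := hf (compm m chi).
rewrite mx_evalE horner_mxZ -map_horner_mx /= in HB.
have dF : tofrac d != 0 by rewrite tofrac_eq0.
have key : forall j : 'I_m.+1, (g %% chi)`_j = d * B ord0 j.
  move=> j; rewrite -(row0_horner cmon csize); apply/eqP; rewrite -tofrac_eq.
  have := congr1 (fun X : 'M__ => X ord0 j) HB; rewrite !mxE => E.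
  by rewrite rmorphM /= -E mulrA mulfV // mul1r.
have Hs : (size (g %% chi)%R <= m.+1)%N.
  by rewrite -ltnS -csize ltn_modp -size_poly_eq0 csize.
exists (\poly_(j < m.+1) B ord0 (inord j)); split; first exact: size_poly.
apply/polyP => j; rewrite coefZ coef_poly; case: ltnP => Hj.
  by have := key (inord j); rewrite inordK.
by rewrite mulr0 nth_default // (leq_trans Hs Hj).
Qed.

Theorem mainTheorem6 (D : idomainType) (M : D -> Prop) (n : nat)
    (hD : dedekind D) (hM : maximal_ideal M) (hfin : finite_index M)
    (hn : (1 <= n)%N)
    (g : {poly D}) (d : D) (hd : d != 0)
    (hf : int_valued_mx n ((tofrac d)^-1 *: map_poly (@tofrac D) g))
    (C : nat -> 'M[D]_n) (hC : completion_mx M C) :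
  exists (N : nat) (s : nat -> {poly D}),
    completion_poly M N s /\
    forall k (i j : 'I_n),
      ideal_pow M k (mx_eval g (C k) i j - d * mx_eval (s k) (C k) i j).
Proof.
case: n hn hf C hC => [//|m] _ hf C hC.
have [hMi _ _] := hM.
have hk := ip_ideal hMi.
pose chi k := char_poly (C k).
have cmon : forall k, chi k \is monic by move=> k; apply: char_poly_monic.
have csize : forall k, size (chi k) = m.+2 by move=> k; apply: size_char_poly.
have Hex := fun k => int_rem hd hf (cmon k) (csize k).
pose T k := sval (constructive_indefinite_description _ (Hex k)).
have HT : forall k, (size (T k) <= m.+1)%N /\ g %% chi k = d *: T k.
  by move=> k; rewrite /T; case: constructive_indefinite_description.
pose r k := g %% chi k.
have rsize : forall k, (size (r k) <= m.+1)%N.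
  by move=> k; rewrite -ltnS -(csize k) ltn_modp -size_poly_eq0 csize.
have ccong : forall k, pin (ideal_pow M k) (chi k.+1 - chi k).
  by move=> k; apply: char_poly_cong => //; apply: hC.
have rcong : forall k j, ideal_pow M k ((r k.+1)`_j - (r k)`_j).
  move=> k j; case: (ltnP j m.+1) => Hj; last first.
    by rewrite !nth_default ?subrr ?(leq_trans (rsize _) Hj) //; apply: ip0.
  have -> : j = Ordinal Hj by [].
  rewrite /r -!(row0_horner (cmon _) (csize _)).
  apply: horner_cong => // i1 j1; rewrite !mxE.
  case: (nat_of_ord i1 == m) => /=; last by rewrite subrr; apply: ip0.
  have -> : forall a b : D, - a - - b = - (a - b) by move=> a b; rewrite opprB opprK addrC.
  by apply: ipN => //; have := ccong k j1; rewrite coefB.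
have rfar : forall k l, (k <= l)%N -> forall j, ideal_pow M k ((r l)`_j - (r k)`_j).
  move=> k l /subnK <-; elim: (l - k)%N => [|q IH] j.
    by rewrite add0n subrr; apply: ip0.
  rewrite addSn.
  have -> : (r (q + k).+1)`_j - (r k)`_j =
     ((r (q + k).+1)`_j - (r (q + k))`_j) + ((r (q + k))`_j - (r k)`_j).
    by rewrite addrA subrK.
  apply: (ipD hMi); last exact: IH.
  apply: (ip_mono (leq_addl q k)); exact: rcong.
have [e He] := factA hD hM hd.
exists m.+1, (fun k => T (k + e)); split; first split.
- by move=> k; case: (HT (k + e)).
- move=> k i; apply: He; rewrite mulrBr.
  have := rcong (k + e)%N i.
  by rewrite /r (HT (k + e).+1).2 (HT (k + e)).2 !coefZ.
- move=> k i j.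
  rewrite !mx_evalE.
  have -> : horner_mx (C k) g = horner_mx (C k) (r k).
    rewrite {1}(Pdiv.IdomainMonic.divp_eq (cmon k) g) rmorphD rmorphM /=.
    by rewrite Cayley_Hamilton mulr0 add0r.
  have -> : d * horner_mx (C k) (T (k + e)) i j = horner_mx (C k) (r (k + e)) i j.
    by rewrite /r (HT (k + e)).2 horner_mxZ mxE.
  have E : forall A B : 'M[D]_m.+1, A i j - B i j = (A - B) i j.
    by move=> A B; rewrite !mxE.
  rewrite E -rmorphB /=; apply: horner_in => // l.
  rewrite coefB -opprB; apply: ipN => //; apply: rfar; exact: leq_addr.
Qed.
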